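(* Consider incentivized exploration with two arms and $\mu_1^0\ge\mu_2^0$, and let ALG be any bandit algorithm. Algorithm RepeatedHiddenExploration with ALG, initial exploration length $N_0$ and exploration probability $\varepsilon>0$ is Bayesian incentive-compatible as long as $\varepsilon\le\frac13\,\mathbb{E}[G\cdot\mathbf{1}\{G>0\}]$, where $G=\mathbb{E}[\mu_2-\mu_1\mid\mathcal{S}_{N_0+1}]$ and $\mathcal{S}_{N_0+1}$ consists of the first $N_0$ samples (rewards) of arm $1$.
   Context: Two arms; $\mu=(\mu_1,\mu_2)\in[0,1]^2$ is drawn from a prior $\mathcal{P}$ (possibly correlated); a known family of reward distributions $(\mathcal{D}_x)_{x\in[0,1]}$ on $[0,1]$, each with mean $x$ and finitely many values; choosing arm $a$ yields an independent reward from $\mathcal{D}_{\mu_a}$. $\mu_a^0=\mathbb{E}[\mu_a]$. In each round $t$ the algorithm recommends an arm $\mathrm{rec}_t$, an agent chooses $a_t$ and receives reward $r_t$, which the algorithm observes. Let $\mathcal{E}_{t-1}=\{a_s=\mathrm{rec}_s\ \forall s\in[t-1]\}$. An algorithm is Bayesian incentive-compatible (BIC) if for every round $t$ and distinct arms $a,a'$ with $\Pr[\mathrm{rec}_t=a,\mathcal{E}_{t-1}]>0$ we have $\mathbb{E}[\mu_a-\mu_{a'}\mid\mathrm{rec}_t=a,\mathcal{E}_{t-1}]\ge0$ (agents comply with BIC recommendations). RepeatedHiddenExploration: in the first $N_0$ rounds recommend arm $1$; in each subsequent round $t$, with probability $\varepsilon$ (independently) call ALG, recommend the arm it chooses and feed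 it the resulting reward (exploration round); otherwise recommend $\min\big(\arg\max_{a\in\{1,2\}}\mathbb{E}[\mu_a\mid\mathcal{S}_t]\big)$, where $\mathcal{S}_t$ is the tuple $(s,a_s,r_s)$ over all previous exploration rounds $s<t$, including the first $N_0$ rounds. *)

(* Defs.v *)
From HB Require Import structures.
From mathcomp Require Import all_boot all_order all_algebra.
From mathcomp Require Import all_classical all_reals all_analysis.
Set Implicit Arguments. Unset Strict Implicit. Unset Printing Implicit Defensive.
Import Order.TTheory GRing.Theory Num.Theory.
Local Open Scope ring_scope.

Definition arm := bool.
Definition arm1 : arm := false.
Definition arm2 : arm := true.

Section RHE.
Context (R : realType) (d : measure_display) (T : measurableType d).
(* The prior: mu = (mu1, mu2) is a random vector on the probability space (T, P). *)
Context (P : probability T R) (mu1 mu2 : T -> R).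
(* Reward distributions: D x v = probability that a reward drawn from D_x equals
   the value [rv v]; V is the (finite) set of possible reward outcomes. *)
Context (V : finType) (rv : V -> R) (D : R -> V -> R).
(* ALG: a (possibly randomized) bandit algorithm, given by the probability
   that it pulls arm 2 given its own history of (arm, reward) observations. *)
Context (alg : seq (arm * V) -> R).
Context (N0 : nat) (eps : R).

Definition Ex (f : T -> R) : R := fine (\int[P]_w (f w)%:E).

Definition muw (w : T) : arm -> R := fun b => if b then mu2 w else mu1 w.

Definition algP (h : seq (arm * V)) (b : arm) : R :=
  if b then alg h else 1 - alg h.

(* A history S_t is recorded as the sequence, over rounds 1..t-1, of
   [Some (a_s, r_s)] for exploration rounds and [None] for exploitation rounds. *)
Definition algHist (sig : seq (option (arm * V))) : seq (arm * V) :=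
  pmap id (drop N0 sig).

(* probability of the event that round r+1 contributes [o] to S, given the
   earlier part [hist] of S and the mean vector m *)
Definition stepP (r : nat) (hist : seq (option (arm * V))) (o : option (arm * V))
  (m : arm -> R) : R :=
  if (r < N0)%N then
    match o with Some (b, v) => if b then 0 else D (m arm1) v | None => 0 end
  else
    match o with
    | Some (b, v) => eps * algP (algHist hist) b * D (m b) v
    | None => 1 - eps
    end.

(* Pr[ S_{size sig + 1} = sig | mu = m ] *)
Definition pS (sig : seq (option (arm * V))) (m : arm -> R) : R :=
  \prod_(r < size sig) stepP r (take r sig) (nth None sig r) m.

(* E[ mu_b | S = sig ] (elementary conditional expectation; = 0 if Pr = 0) *)
Definition postMean (sig : seq (option (arm * V))) (b : arm) : R :=
  Ex (fun w => muw w b * pS sig (muw w)) / Ex (fun w => pS sig (muw w)).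

(* min (argmax_a E[mu_a | S]) : arm 2 only if strictly better *)
Definition exploitArm (sig : seq (option (arm * V))) : arm :=
  postMean sig arm1 < postMean sig arm2.

(* Pr[ rec_t = a | S_t = sig ], t = size sig + 1 *)
Definition recProb (sig : seq (option (arm * V))) (a : arm) : R :=
  if (size sig < N0)%N then (a == arm1)%:R
  else eps * algP (algHist sig) a + (1 - eps) * (exploitArm sig == a)%:R.

(* Pr[ rec_t = a | mu = m ]  (rounds t >= 1) *)
Definition pRec (t : nat) (a : arm) (m : arm -> R) : R :=
  \sum_(sig : (t.-1).-tuple (option (arm * V))) pS sig m * recProb sig a.

Definition PrRec (t : nat) (a : arm) : R := Ex (fun w => pRec t a (muw w)).

(* E[ mu_a - mu_{a'} | rec_t = a ], a' the other arm *)
Definition condGain (t : nat) (a : arm) : R :=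
  Ex (fun w => (muw w a - muw w (~~ a)) * pRec t a (muw w)) / PrRec t a.

(* E[ G * 1{G > 0} ], G = E[mu2 - mu1 | S_{N0+1}] *)
Definition EGplus : R :=
  \sum_(sig : N0.-tuple (option (arm * V)))
    Ex (fun w => pS sig (muw w)) *
    (let g := postMean sig arm2 - postMean sig arm1 in if 0 < g then g else 0).

(* Bayesian incentive-compatibility of RepeatedHiddenExploration
   (agents comply, so E_{t-1} holds with probability one). *)
Definition BIC_RHE : Prop :=
  forall (t : nat) (a : arm), (0 < t)%N -> 0 < PrRec t a -> 0 <= condGain t a.

End RHE.

(* Main.v *)
Require Import Defs.
From HB Require Import structures.
From mathcomp Require Import all_boot all_order all_algebra.
From mathcomp Require Import all_classical all_reals all_analysis.
From mathcomp Require Import measurable_realfun ring lra.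
Import Order.TTheory GRing.Theory Num.Theory.
Set Implicit Arguments. Unset Strict Implicit. Unset Printing Implicit Defensive.
Local Open Scope ring_scope.

Section ExTheory.
Context (R : realType) (d : measure_display) (T : measurableType d)
  (P : probability T R).

Definition good (f : T -> R) :=
  measurable_fun setT f /\ exists M : R, forall w, `|f w| <= M.

Lemma good_int f : good f -> P.-integrable setT (EFin \o f).
Proof.
move=> [mf [M hM]]; apply/integrableP; split; first exact/measurable_EFinP.
have M0 : 0 <= M by apply: le_trans (hM point).
apply: (@le_lt_trans _ _ (M%:E * P setT)%E).
  apply: integral_le_bound => //; first exact/measurable_EFinP.
  by apply: aeW => w _; rewrite /= lee_fin.
by rewrite probability_setT mule1 ltry.
Qed.

Lemma ExE f : Ex P f = Rintegral P setT f.
Proof. by []. Qed.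

Lemma ExD f g : good f -> good g -> Ex P (fun w => f w + g w) = Ex P f + Ex P g.
Proof. by move=> gf gg; rewrite !ExE RintegralD //; apply: good_int. Qed.

Lemma ExZ c f : good f -> Ex P (fun w => c * f w) = c * Ex P f.
Proof. by move=> gf; rewrite !ExE RintegralZl //; apply: good_int. Qed.

Lemma Ex_le f g : good f -> good g -> (forall w, f w <= g w) -> Ex P f <= Ex P g.
Proof. by move=> gf gg fg; rewrite !ExE le_Rintegral //; apply: good_int. Qed.

Lemma Ex_cst c : Ex P (fun _ => c) = c.
Proof. rewrite ExE Rintegral_cst //; have h := probability_setT P; rewrite [X in fine X](_ : _ = 1%E) ?mulr1 //. Qed.

Lemma Ex_ext f g : (forall w, f w = g w) -> Ex P f = Ex P g.
Proof. by move=> fg; congr Ex; apply: funext. Qed.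

Lemma good_cst c : good (fun _ => c).
Proof. by split; [exact: measurable_cst | exists `|c|]. Qed.

Lemma good_add f g : good f -> good g -> good (fun w => f w + g w).
Proof.
move=> [mf [M hM]] [mg [N hN]]; split; first exact: measurable_funD.
exists (M + N) => w; apply: le_trans (ler_normD _ _) _; exact: lerD.
Qed.

Lemma good_mul f g : good f -> good g -> good (fun w => f w * g w).
Proof.
move=> [mf [M hM]] [mg [N hN]]; split; first exact: measurable_funM.
exists (M * N) => w; rewrite normrM; apply: ler_pM => //.
Qed.

Lemma good_ext f g : (forall w, f w = g w) -> good f -> good g.
Proof. by move=> fg; have -> : g = f by apply: funext => w; rewrite fg. Qed.

Lemma good_sum (I : Type) (s : seq I) (F : I -> T -> R) :
  (forall i, good (F i)) -> good (fun w => \sum_(i <- s) F i w).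
Proof.
move=> gF; elim: s => [|i s IH].
  by apply: (good_ext (f := fun _ => 0) _ (good_cst 0)) => w; rewrite big_nil.
by apply: (good_ext _ (good_add (gF i) IH)) => w; rewrite big_cons.
Qed.

Lemma good_prod (I : Type) (s : seq I) (F : I -> T -> R) :
  (forall i, good (F i)) -> good (fun w => \prod_(i <- s) F i w).
Proof.
move=> gF; elim: s => [|i s IH].
  by apply: (good_ext (f := fun _ => 1) _ (good_cst 1)) => w; rewrite big_nil.
by apply: (good_ext _ (good_mul (gF i) IH)) => w; rewrite big_cons.
Qed.

Lemma Ex_sum (I : Type) (s : seq I) (F : I -> T -> R) :
  (forall i, good (F i)) -> Ex P (fun w => \sum_(i <- s) F i w) = \sum_(i <- s) Ex P (F i).
Proof.
move=> gF; elim: s => [|i s IH].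
  rewrite big_nil -[RHS](Ex_cst 0); apply: Ex_ext => w; by rewrite big_nil.
rewrite big_cons -IH -ExD //; last exact: good_sum.
by apply: Ex_ext => w; rewrite big_cons.
Qed.

End ExTheory.

Lemma sum_tuple_rcons (R : nmodType) (X : finType) n (F : seq X -> R) :
  \sum_(s : n.+1.-tuple X) F s = \sum_(s : n.-tuple X) \sum_(x : X) F (rcons s x).
Proof.
rewrite pair_big /=.
pose h (p : n.-tuple X * X) : n.+1.-tuple X := [tuple of rcons p.1 p.2].
have hinj : injective h.
  move=> [s x] [s' x'] /(congr1 val) /= /eqP; rewrite eqseq_rcons => /andP[/eqP hs /eqP ->].
  by congr pair; apply: val_inj.
have hbij : bijective h.
  apply: (inj_card_bij hinj).
  by rewrite card_prod !card_tuple expnS mulnC.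
rewrite (reindex h) /=; last by apply: onW_bij.
by apply: eq_bigr.
Qed.
Lemma sum_option (R : nmodType) (Y : finType) (F : option Y -> R) :
  \sum_(o : option Y) F o = F None + \sum_(y : Y) F (Some y).
Proof.
rewrite (bigD1 None) //=; congr (_ + _).
rewrite (reindex_omap Some (fun o => o)) /=; last by case.
by apply: eq_bigl => y; rewrite eqxx.
Qed.

Lemma sum_pair (R : nmodType) (A B : finType) (F : A * B -> R) :
  \sum_(p : A * B) F p = \sum_(a : A) \sum_(b : B) F (a, b).
Proof. by rewrite (pair_bigA _ (fun a b => F (a, b))); apply: eq_bigr => [[a b]]. Qed.

Lemma sum_tuple0 (R : nmodType) (Y : finType) (F : seq Y -> R) :
  \sum_(s : 0.-tuple Y) F s = F [::].
Proof. by rewrite (big_pred1 [tuple]) // => t; rewrite /= [t]tuple0; apply/esym/eqP. Qed.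

Section Model.
Context (R : realType) (d : measure_display) (T : measurableType d)
  (P : probability T R) (mu1 mu2 : T -> R)
  (V : finType) (D : R -> V -> R)
  (alg : seq (arm * V) -> R) (N0 : nat) (eps : R).
Context (mmu1 : measurable_fun setT mu1) (mmu2 : measurable_fun setT mu2)
  (hmu1 : forall w, 0 <= mu1 w <= 1) (hmu2 : forall w, 0 <= mu2 w <= 1)
  (hD0 : forall x v, 0 <= x <= 1 -> 0 <= D x v)
  (hD1 : forall x, 0 <= x <= 1 -> \sum_v D x v = 1)
  (mD : forall v, measurable_fun (`[0%R, 1%R]%classic : set R) (fun x : R => D x v))
  (halg : forall h, 0 <= alg h <= 1).

Local Notation X := (option (arm * V)).
Local Notation pS := (pS D alg N0 eps).
Local Notation stepP := (stepP D alg N0 eps).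
Local Notation mw := (muw mu1 mu2).

Lemma valid_mw w b : 0 <= mw w b <= 1.
Proof. by case: b; rewrite /muw. Qed.

Lemma algP_bnd h b : 0 <= algP alg h b <= 1.
Proof. by case: b; rewrite /algP; have := halg h => /andP[? ?]; apply/andP; split; lra. Qed.

Lemma step_sum r h (m : arm -> R) : (forall b, 0 <= m b <= 1) ->
  \sum_(o : X) stepP r h o m = 1.
Proof.
move=> hm; rewrite sum_option /stepP sum_pair big_bool /=; case: ifP => _.
  by rewrite big1 // add0r hD1 // add0r.
rewrite -!mulr_sumr !hD1 // /algP; lra.
Qed.

Lemma pS_rcons sig o m : pS (rcons sig o) m = pS sig m * stepP (size sig) sig o m.
Proof.
rewrite /Defs.pS size_rcons big_ord_recr /=; congr (_ * _).
  apply: eq_bigr => i _; rewrite -cats1 takel_cat ?nth_cat ?ltn_ord //.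
  exact: ltnW.
by rewrite -cats1 take_size_cat // nth_cat ltnn subnn.
Qed.

Lemma pS_ge0 sig m : (forall b, 0 <= m b <= 1) ->
  (size sig <= N0)%N \/ (0 <= eps <= 1) -> 0 <= pS sig m.
Proof.
move=> hm hs; rewrite /Defs.pS; apply: prodr_ge0 => i _; rewrite /Defs.stepP.
case: ifPn => hi.
  by case: (nth None sig i) => [[[] v]|] //; apply: hD0.
case: hs => [hs|he].
  by exfalso; move: hi; rewrite -leqNgt => /(leq_trans hs); rewrite leqNgt ltn_ord.
case: (nth None sig i) => [[b v]|]; last lra.
apply: mulr_ge0; last exact: hD0.
by apply: mulr_ge0; [lra | have := algP_bnd (algHist N0 (take i sig)) b => /andP[]].
Qed.

Lemma sum_tuples_pS n m : (forall b, 0 <= m b <= 1) ->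
  \sum_(s : n.-tuple X) pS s m = 1.
Proof.
move=> hm; elim: n => [|n IH].
  by rewrite (sum_tuple0 (fun s => pS s m)) /Defs.pS big_ord0.
rewrite (sum_tuple_rcons _ (fun s => pS s m)) -[RHS]IH; apply: eq_bigr => s _.
under eq_bigr do rewrite pS_rcons.
by rewrite -mulr_sumr step_sum // mulr1.
Qed.


Local Notation good := (good (T := T)).
Local Notation Ex := (Ex P).

Lemma ExN f : good f -> Ex (fun w => - f w) = - Ex f.
Proof. by move=> gf; rewrite -mulN1r -ExZ //; apply: Ex_ext => w; rewrite mulN1r. Qed.

Lemma ExB f g : good f -> good g -> Ex (fun w => f w - g w) = Ex f - Ex g.
Proof.
move=> gf gg; rewrite -ExN // -ExD //.
by apply: (good_ext _ (good_mul (good_cst _ (-1)) gg)) => w; rewrite mulN1r.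
Qed.

Lemma good_muw b : good (fun w => mw w b).
Proof.
split; first by case: b.
by exists 1 => w; have := valid_mw w b => /andP[h0 h1]; rewrite ger0_norm.
Qed.

Lemma D_le1 x v : 0 <= x <= 1 -> D x v <= 1.
Proof.
move=> hx; rewrite -(hD1 hx) (bigD1 v) //= lerDl; apply: sumr_ge0 => i _; exact: hD0.
Qed.

Lemma good_D b v : good (fun w => D (mw w b) v).
Proof.
split.
  apply: (measurable_comp _ _ (mD v) (good_muw b).1) => //.
  move=> x [w _ <-] /=; rewrite in_itv /=; exact: valid_mw.
exists 1 => w; rewrite ger0_norm; [exact/D_le1/valid_mw | exact/hD0/valid_mw].
Qed.

Lemma good_step r h o : good (fun w => stepP r h o (mw w)).
Proof.
rewrite /Defs.stepP; case hr: (r < N0)%N.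
  case: o => [[[] v]|] /=; [exact: good_cst | exact: (good_D false v) | exact: good_cst].
case: o => [[b v]|] /=; last exact: good_cst.
exact: good_mul (good_cst _ _) (good_D b v).
Qed.

Lemma good_pS sig : good (fun w => pS sig (mw w)).
Proof. by apply: good_prod => i; apply: good_step. Qed.

Lemma good_hpS (h : T -> R) sig : good h -> good (fun w => h w * pS sig (mw w)).
Proof. by move=> gh; apply: good_mul gh (good_pS sig). Qed.

Lemma Ex_sum_rcons (h : T -> R) sig : good h ->
  \sum_(x : X) Ex (fun w => h w * pS (rcons sig x) (mw w)) = Ex (fun w => h w * pS sig (mw w)).
Proof.
move=> gh; rewrite -Ex_sum; last by move=> x; apply: good_hpS.
apply: Ex_ext => w; rewrite -mulr_sumr; under eq_bigr do rewrite pS_rcons.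
by rewrite -mulr_sumr step_sum ?mulr1 //; apply: valid_mw.
Qed.

Lemma Ex_sum_tuples (h : T -> R) n : good h ->
  \sum_(s : n.-tuple X) Ex (fun w => h w * pS s (mw w)) = Ex h.
Proof.
move=> gh; rewrite -Ex_sum; last by move=> x; apply: good_hpS.
apply: Ex_ext => w; rewrite -mulr_sumr sum_tuples_pS ?mulr1 //; apply: valid_mw.
Qed.


Definition Ew sig := Ex (fun w => pS sig (mw w)).
Definition Gs sig := Ex (fun w => (mu2 w - mu1 w) * pS sig (mw w)).
Definition pos (x : R) := if 0 < x then x else 0.

Lemma good_d : good (fun w => mu2 w - mu1 w).
Proof.
apply: (good_ext _ (good_add (good_muw true) (good_mul (good_cst _ (-1)) (good_muw false)))).
by move=> w; rewrite mulN1r.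
Qed.

Lemma Ew_ge0 sig : (size sig <= N0)%N \/ (0 <= eps <= 1) -> 0 <= Ew sig.
Proof.
move=> hs; rewrite -(Ex_cst P 0); apply: Ex_le; [exact: good_cst | exact: good_pS |].
by move=> w; apply: pS_ge0 => // b; apply: valid_mw.
Qed.

Lemma Gs_bnd sig : (size sig <= N0)%N \/ (0 <= eps <= 1) -> - Ew sig <= Gs sig <= Ew sig.
Proof.
move=> hs; have p0 w : 0 <= pS sig (mw w) by apply: pS_ge0 => // b; apply: valid_mw.
apply/andP; split.
  rewrite /Ew -ExN; last exact: good_pS.
  apply: Ex_le; [ | exact: good_hpS good_d|].
    by apply: (good_ext _ (good_mul (good_cst _ (-1)) (good_pS sig))) => w; rewrite mulN1r.
  move=> w; have := p0 w; have := hmu1 w; have := hmu2 w => /andP[? ?] /andP[? ?] ?; nra.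
apply: Ex_le; [exact: good_hpS good_d | exact: good_pS|].
move=> w; have := p0 w; have := hmu1 w; have := hmu2 w => /andP[? ?] /andP[? ?] ?; nra.
Qed.

Lemma sum_Ew n : \sum_(s : n.-tuple X) Ew s = 1.
Proof.
rewrite -[RHS](Ex_cst P 1) -(Ex_sum_tuples n (good_cst _ 1)).
by apply: eq_bigr => s _; apply: Ex_ext => w; rewrite mul1r.
Qed.

Lemma sum_Gs n : \sum_(s : n.-tuple X) Gs s = Ex mu2 - Ex mu1.
Proof.
rewrite /Gs Ex_sum_tuples; last exact: good_d.
rewrite -ExB //; [exact: (good_muw true) | exact: (good_muw false)].
Qed.

Lemma Gs_rcons sig : \sum_(x : X) Gs (rcons sig x) = Gs sig.
Proof. by rewrite /Gs Ex_sum_rcons //; exact: good_d. Qed.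

Lemma pos_sum (I : Type) (r : seq I) (F : I -> R) :
  pos (\sum_(i <- r) F i) <= \sum_(i <- r) pos (F i).
Proof.
have h1 : \sum_(i <- r) F i <= \sum_(i <- r) pos (F i).
  by apply: ler_sum => i _; rewrite /pos; case: ifP => h //; lra.
have h2 : 0 <= \sum_(i <- r) pos (F i).
  by apply: sumr_ge0 => i _; rewrite /pos; case: ifP => h //; lra.
by rewrite /pos; case: ifP.
Qed.

Definition S n := \sum_(s : n.-tuple X) pos (Gs s).

Lemma S_step n : S n <= S n.+1.
Proof.
rewrite /S (sum_tuple_rcons _ (fun s => pos (Gs s))); apply: ler_sum => s _.
by rewrite -[in X in pos X]Gs_rcons; apply: pos_sum.
Qed.

Lemma S_mono m n : (m <= n)%N -> S m <= S n.
Proof.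
move=> /subnK <-; elim: (n - m)%N => [|k IH]; first by rewrite add0n.
by apply: le_trans IH (S_step _).
Qed.


Local Notation postMean := (postMean P mu1 mu2 D alg N0 eps).
Local Notation exploitArm := (exploitArm P mu1 mu2 D alg N0 eps).

Lemma Gs_A sig : Gs sig = Ex (fun w => mw w true * pS sig (mw w)) - Ex (fun w => mw w false * pS sig (mw w)).
Proof.
rewrite -ExB; [|exact: good_hpS (good_muw true) | exact: good_hpS (good_muw false)].
by apply: Ex_ext => w; rewrite /muw mulrBl.
Qed.

Lemma pm_diff sig : postMean sig true - postMean sig false = Gs sig / Ew sig.
Proof. by rewrite /Defs.postMean -mulrBl Gs_A. Qed.

Lemma key_gen sig : (size sig <= N0)%N \/ (0 <= eps <= 1) ->
  (Ew sig * (if 0 < Gs sig / Ew sig then Gs sig / Ew sig else 0) = pos (Gs sig)) /\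
  ((if 0 < Gs sig / Ew sig then Gs sig else 0) = pos (Gs sig)).
Proof.
move=> hs; have := Ew_ge0 hs; have := Gs_bnd hs => /andP[hl hu].
rewrite le_eqVlt => /orP[/eqP E0 | Epos].
  have G0 : Gs sig = 0 by rewrite -E0 in hl hu; lra.
  by rewrite -E0 G0 /pos mul0r ltxx; split => //; case: ifP.
have Ei : 0 < (Ew sig)^-1 by rewrite invr_gt0.
rewrite (pmulr_lgt0 _ Ei) /pos; case: ifP => _; last by rewrite mulr0.
by split => //; rewrite mulrCA mulfV ?mulr1 // gt_eqF.
Qed.

Lemma keyE sig : (size sig <= N0)%N \/ (0 <= eps <= 1) ->
  Ew sig * (let g := postMean sig arm2 - postMean sig arm1 in if 0 < g then g else 0) = pos (Gs sig).
Proof. by move=> hs; rewrite /= pm_diff; case: (key_gen hs). Qed.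

Lemma keyB sig : (size sig <= N0)%N \/ (0 <= eps <= 1) ->
  (if exploitArm sig then Gs sig else 0) = pos (Gs sig).
Proof. by move=> hs; rewrite /Defs.exploitArm -subr_gt0 pm_diff; case: (key_gen hs). Qed.

Lemma EG_S : EGplus P mu1 mu2 D alg N0 eps = S N0.
Proof.
by rewrite /EGplus /S; apply: eq_bigr => s _; apply: keyE; left; rewrite size_tuple.
Qed.


Lemma good_dA a : good (fun w => mw w a - mw w (~~ a)).
Proof.
apply: (good_ext _ (good_add (good_muw a) (good_mul (good_cst _ (-1)) (good_muw (~~ a))))).
by move=> w; rewrite mulN1r.
Qed.

Lemma num_eq t a :
  Ex (fun w => (mw w a - mw w (~~ a)) * pRec P mu1 mu2 D alg N0 eps t a (mw w)) =
  \sum_(s : (t.-1).-tuple X) recProb P mu1 mu2 D alg N0 eps s a * (if a then Gs s else - Gs s).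
Proof.
transitivity (\sum_(s : (t.-1).-tuple X)
   Ex (fun w => recProb P mu1 mu2 D alg N0 eps s a * ((mw w a - mw w (~~ a)) * pS s (mw w)))).
  rewrite -Ex_sum; last by move=> s; apply: good_mul (good_cst _ _) (good_hpS _ (good_dA a)).
  apply: Ex_ext => w; rewrite /pRec mulr_sumr; apply: eq_bigr => s _.
  by ring.
apply: eq_bigr => s _; rewrite ExZ; last exact: good_hpS (good_dA a).
congr (_ * _); case: a => /=.
  by rewrite /Gs; apply: Ex_ext => w.
rewrite /Gs -ExN; last exact: good_hpS good_d.
by apply: Ex_ext => w; rewrite /muw -mulNr opprB.
Qed.

Lemma main : Ex mu2 <= Ex mu1 -> 0 < eps ->
  eps <= EGplus P mu1 mu2 D alg N0 eps / 3 ->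
  BIC_RHE P mu1 mu2 D alg N0 eps.
Proof.
move=> hEx heps hEG t a t0 hPr; rewrite /condGain; apply: divr_ge0; last exact: ltW.
clear hPr.
rewrite EG_S in hEG.
have EG1 : S N0 <= 1.
  rewrite /S -(sum_Ew N0); apply: ler_sum => s _.
  have hs : (size s <= N0)%N \/ (0 <= eps <= 1) by left; rewrite size_tuple.
  have := Ew_ge0 hs; have := Gs_bnd hs => /andP[? ?] ?; rewrite /pos; case: ifP => _; lra.
have hs : forall s : seq X, (size s <= N0)%N \/ (0 <= eps <= 1) by move=> s; right; lra.
rewrite num_eq; set n := t.-1.
case: (ltnP n N0) => hn.
  rewrite (eq_bigr (fun s : n.-tuple X => (a == arm1)%:R * (if a then Gs s else - Gs s))); last first.
    by move=> s _; rewrite /recProb size_tuple hn.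
  case: a => /=; first by rewrite big1 // => s _; rewrite mul0r.
  under eq_bigr do rewrite mul1r.
  by rewrite sumrN sum_Gs; lra.
rewrite (eq_bigr (fun s : n.-tuple X => eps * (algP alg (algHist N0 s) a * (if a then Gs s else - Gs s)) +
   (1 - eps) * ((exploitArm s == a)%:R * (if a then Gs s else - Gs s)))); last first.
  move=> s _; rewrite /recProb size_tuple ltnNge hn /=.
  by rewrite mulrDl !mulrA.
rewrite big_split -!mulr_sumr /=.
have h1 : -1 <= \sum_(s : n.-tuple X) algP alg (algHist N0 s) a * (if a then Gs s else - Gs s).
  rewrite -(sum_Ew n) -sumrN; apply: ler_sum => s _.
  have := Ew_ge0 (hs s); have := Gs_bnd (hs s) => /andP[? ?] ?.
  move: (algP_bnd (algHist N0 s) a); case: a => /= /andP[? ?]; nra.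
have h2 : S N0 <= \sum_(s : n.-tuple X) (exploitArm s == a)%:R * (if a then Gs s else - Gs s).
  clear h1; apply: le_trans (S_mono hn) _; rewrite /S.
  case: a => /=.
    apply: ler_sum => s _; rewrite eqb_id -(keyB (hs s)).
    by case: (exploitArm s); rewrite /= ?mul1r ?mul0r.
  have -> : \sum_(s : n.-tuple X) (exploitArm s == false)%:R * - Gs s =
            \sum_(s : n.-tuple X) (pos (Gs s) - Gs s).
    apply: eq_bigr => s _; rewrite -(keyB (hs s)).
    by case: (exploitArm s); rewrite /= ?mul1r ?mul0r ?subrr ?add0r.
  rewrite sumrB sum_Gs; lra.
nra.
Qed.

End Model.

Theorem theorem11p16 (R : realType) (d : measure_display) (T : measurableType d)
  (P : probability T R) (mu1 mu2 : T -> R)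
  (V : finType) (rv : V -> R) (D : R -> V -> R)
  (alg : seq (arm * V) -> R) (N0 : nat) (eps : R) :
  measurable_fun setT mu1 -> measurable_fun setT mu2 ->
  (forall w, 0 <= mu1 w <= 1) -> (forall w, 0 <= mu2 w <= 1) ->
  (forall v, 0 <= rv v <= 1) ->
  (forall x v, 0 <= x <= 1 -> 0 <= D x v) ->
  (forall x, 0 <= x <= 1 -> \sum_v D x v = 1) ->
  (forall x, 0 <= x <= 1 -> \sum_v D x v * rv v = x) ->
  (forall v, measurable_fun (`[0%R, 1%R]%classic : set R) (fun x : R => D x v)) ->
  (forall h, 0 <= alg h <= 1) ->
  Ex P mu2 <= Ex P mu1 ->
  0 < eps ->
  eps <= EGplus P mu1 mu2 D alg N0 eps / 3 ->
  BIC_RHE P mu1 mu2 D alg N0 eps.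
Proof.
move=> mmu1 mmu2 hmu1 hmu2 _ hD0 hD1 _ mD halg hEx heps hEG.
exact: (main mmu1 mmu2 hmu1 hmu2 hD0 hD1 mD halg hEx heps hEG).
Qed.
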